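(* For all finite sets of formulas $\Gamma,\Delta$: if the sequent $\Gamma\Rightarrow\Delta$ is provable in $\mathsf{CLp}$, then $\Gamma\Vdash^{cf}\Delta$.
   Context: Fix a countably infinite set $\mathsf{At}$ of atoms. Formulas are built from atoms and the constant $\bot$ using the binary connectives $\land,\lor,\to$. All contexts are finite sets (not multisets) of formulas; a comma denotes union; a subscript $\mathsf{At}$ indicates a finite set of atoms. An atomic sequent has the form $\Gamma_{\mathsf{At}} \Rightarrow \Delta_{\mathsf{At}}$. An atomic rule has finitely many (possibly zero) atomic sequents as premises and one atomic sequent as conclusion; a rule with zero premises is an atomic axiom. A base is a (possibly empty) set of atomic rules; $\mathcal{C}\supseteq\mathcal{B}$ ($\mathcal{C}$ extends $\mathcal{B}$) if $\mathcal{C}$ contains every rule of $\mathcal{B}$. Derivability $\vdash_{\mathcal{B}}$ of atomic sequents is the least relation such that: (Axiom/Weakening) if an atomic axiom with conclusion $\Gamma_{\mathsf{At}}\Rightarrow\Delta_{\mathsf{At}}$ is in $\mathcal{B}$, then $\vdash_{\mathcal{B}} \Theta_{\mathsf{At}},\Gamma_{\mathsf{At}}\Rightarrow\Delta_{\mathsf{At}},\Sigma_{\mathsf{At}}$ for all sets of atoms $\Theta_{\mathsf{At}},\Sigma_{\mathsf{At}}$; (Mix) if a rule with premises $\Gamma^i_{\mathsf{At}}\Rightarrow\Delta^i_{\mathsf{At}}$ ($1\le i\le n$) and conclusion $\Gamma_{\mathsf{At}}\Rightarrow\Delta_{\mathsf{At}}$ is in $\mathcal{B}$ and $\vdash_{\mathcal{B}}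 \Theta^i_{\mathsf{At}},\Gamma^i_{\mathsf{At}}\Rightarrow\Delta^i_{\mathsf{At}},\Sigma^i_{\mathsf{At}}$ for each $i$, then $\vdash_{\mathcal{B}} \Theta^1_{\mathsf{At}},\dots,\Theta^n_{\mathsf{At}},\Gamma_{\mathsf{At}}\Rightarrow\Delta_{\mathsf{At}},\Sigma^1_{\mathsf{At}},\dots,\Sigma^n_{\mathsf{At}}$. Support $\Vdash_{\mathcal{B}}$: (At) $\Vdash_{\mathcal{B}}\Gamma_{\mathsf{At}}$ iff $\vdash_{\mathcal{B}}\ \Rightarrow\Gamma_{\mathsf{At}}$; ($\land$) $\Vdash_{\mathcal{B}} A\land B,\Gamma$ iff $\Vdash_{\mathcal{B}}A,\Gamma$ and $\Vdash_{\mathcal{B}}B,\Gamma$; ($\lor$) $\Vdash_{\mathcal{B}}A\lor B,\Gamma$ iff $\Vdash_{\mathcal{B}}A,B,\Gamma$; ($\to$) $\Vdash_{\mathcal{B}}A\to B,\Gamma$ iff $A\Vdash_{\mathcal{B}}B,\Gamma$; ($\bot$) $\Vdash_{\mathcal{B}}\bot,\Gamma$ iff $\Vdash_{\mathcal{B}}\Gamma$; (Inf) for $n\ge1$, $\{A^1,\dots,A^n\}\Vdash_{\mathcal{B}}\Delta$ iff for every $\mathcal{C}\supseteq\mathcal{B}$ and all sets of atoms $\Theta^1_{\mathsf{At}},\dots,\Theta^n_{\mathsf{At}}$, if $\Vdash_{\mathcal{C}}\Theta^i_{\mathsf{At}},A^i$ for all $i$ then $\Vdash_{\mathcal{C}}\Theta^1_{\mathsf{At}},\dots,\Theta^n_{\mathsf{At}},\Delta$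 (and $\varnothing\Vdash_{\mathcal{B}}\Delta$ means $\Vdash_{\mathcal{B}}\Delta$). The atomic identity rule $\mathsf{Ainit}$ is the atomic axiom $\Gamma_{\mathsf{At}},p\Rightarrow p,\Delta_{\mathsf{At}}$. $\mathcal{HS}$ is the base consisting of all instances of $\mathsf{Ainit}$ (all atoms $p$, all sets of atoms). Cut-free validity: $\Gamma\Vdash^{cf}\Delta$ iff $\Gamma\Vdash_{\mathcal{B}}\Delta$ for every base $\mathcal{B}\supseteq\mathcal{HS}$. $\mathsf{CLp}$ is the sequent calculus on sequents $\Gamma\Rightarrow\Delta$ (finite sets of formulas) with rules: $\mathsf{init}$: $\Gamma,A\Rightarrow A,\Delta$; $L\bot$: $\Gamma,\bot\Rightarrow\Delta$; $R\bot$: from $\Gamma\Rightarrow\Delta$ infer $\Gamma\Rightarrow\bot,\Delta$; $L\land$: from $A,B,\Gamma\Rightarrow\Delta$ infer $A\land B,\Gamma\Rightarrow\Delta$; $R\land$: from $\Gamma\Rightarrow\Delta,A$ and $\Gamma'\Rightarrow\Delta',B$ infer $\Gamma,\Gamma'\Rightarrow\Delta,\Delta',A\land B$; $L\lor$: from $A,\Gamma\Rightarrow\Delta$ and $B,\Gamma'\Rightarrow\Delta'$ infer $A\lor B,\Gamma,\Gamma'\Rightarrow\Delta,\Delta'$; $R\lor$: from $\Gamma\Rightarrow\Delta,A,B$ infer $\Gamma\Rightarrow\Delta,A\lor B$; $L\to$: from $\Gamma\Rightarrow\Delta,A$ and $B,\Gamma'\Rightarrow\Delta'$ infer $A\to B,\Gamma,\Gamma'\Rightarrow\Delta,\Delta'$;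 $R\to$: from $A,\Gamma\Rightarrow\Delta,B$ infer $\Gamma\Rightarrow\Delta,A\to B$. *)

(* Defs.v *)
From HB Require Import structures.
From mathcomp Require Import all_boot.
From mathcomp Require Import finmap.
Set Implicit Arguments. Unset Strict Implicit. Unset Printing Implicit Defensive.
Local Open Scope fset_scope.

Definition atom := nat.

Inductive form : Type :=
| Atom : atom -> form
| Bot : form
| And : form -> form -> form
| Or : form -> form -> form
| Imp : form -> form -> form.

Fixpoint form_enc (F : form) : GenTree.tree nat :=
  match F with
  | Atom p => GenTree.Leaf p
  | Bot => GenTree.Node 0 [::]
  | And A B => GenTree.Node 1 [:: form_enc A; form_enc B]
  | Or A B => GenTree.Node 2 [:: form_enc A; form_enc B]
  | Imp A B => GenTree.Node 3 [:: form_enc A; form_enc B]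
  end.

Fixpoint form_dec (t : GenTree.tree nat) : option form :=
  match t with
  | GenTree.Leaf p => Some (Atom p)
  | GenTree.Node 0 [::] => Some Bot
  | GenTree.Node n [:: a; b] =>
      match form_dec a, form_dec b with
      | Some A, Some B =>
          match n with
          | 1 => Some (And A B) | 2 => Some (Or A B) | 3 => Some (Imp A B)
          | _ => None end
      | _, _ => None end
  | _ => None
  end.

Lemma form_encK : pcancel form_enc form_dec.
Proof. by elim=> //= [A -> B ->|A -> B ->|A -> B ->]. Qed.

HB.instance Definition _ := Countable.copy form (pcan_type form_encK).

Definition asequent := ({fset atom} * {fset atom})%type.

Record arule := ARule { premises : seq asequent; conclusion : asequent }.

Definition base := arule -> Prop.

Definition extends (B C : base) : Prop := forall r, B r -> C r.

Inductive derivable (B : base) : {fset atom} -> {fset atom} -> Prop :=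
| der_axiom : forall r, B r -> premises r = [::] ->
    forall Theta Sigma : {fset atom},
      derivable B (Theta `|` (conclusion r).1) ((conclusion r).2 `|` Sigma)
| der_mix : forall r, B r -> 0 < size (premises r) ->
    forall Theta Sigma : nat -> {fset atom},
      (forall i, i < size (premises r) ->
         derivable B (Theta i `|` (nth (fset0, fset0) (premises r) i).1)
                     ((nth (fset0, fset0) (premises r) i).2 `|` Sigma i)) ->
      derivable B ((\bigcup_(i <- iota 0 (size (premises r))) Theta i)
                     `|` (conclusion r).1)
                  ((conclusion r).2
                     `|` \bigcup_(i <- iota 0 (size (premises r))) Sigma i).

Definition is_atom (F : form) : bool := if F is Atom _ then true else false.
Definition get_atom (F : form) : option atom := if F is Atom p then Some p else None.

Definition atoms_of (D : {fset form}) : {fset atom} := [fset p in pmap get_atom D].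

Definition atomset (Th : {fset atom}) : {fset form} := Atom @` Th.

Definition pick_complex (D : {fset form}) : option form :=
  ohead [seq F <- (D : seq form) | ~~ is_atom F].

Fixpoint fsize (F : form) : nat :=
  match F with
  | Atom _ => 0
  | Bot => 1
  | And A B | Or A B | Imp A B => (fsize A + fsize B).+1
  end.

Definition weight (D : {fset form}) : nat := \sum_(F <- D) fsize F.

(** Support with fuel: a non-atomic formula F of D is chosen and D is
    decomposed as F, (D \ F) according to the clauses of the paper; the
    fuel [weight D] is always sufficient. *)
Fixpoint supp (n : nat) (B : base) (D : {fset form}) : Prop :=
  match n with
  | 0 => derivable B fset0 (atoms_of D)
  | n'.+1 =>
    match pick_complex D with
    | None => derivable B fset0 (atoms_of D)
    | Some F =>
      let G := D `\ F in
      match F with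
      | And A C => supp n' B (A |` G) /\ supp n' B (C |` G)
      | Or A C => supp n' B (A |` (C |` G))
      | Imp A C =>                                           (* (->) + (Inf), n = 1 *)
          forall B', extends B B' -> forall Th : {fset atom},
            supp n' B' (A |` atomset Th) -> supp n' B' (C |` (atomset Th `|` G))
      | Bot => supp n' B G
      | Atom _ => derivable B fset0 (atoms_of D)             (* unreachable *)
      end
    end
  end.

Definition support (B : base) (D : {fset form}) : Prop := supp (weight D) B D.

(** Gamma ||-_B Delta, clause (Inf); the atom sets Theta^i are indexed by the
    (distinct) elements A^i of Gamma. *)
Definition supports (B : base) (Gamma Delta : {fset form}) : Prop :=
  if Gamma == fset0 then support B Delta
  else forall C, extends B C -> forall Theta : form -> {fset atom},
    (forall A, A \in Gamma -> support C (atomset (Theta A) `|` [fset A])) ->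
    support C (atomset (\bigcup_(A <- Gamma) Theta A) `|` Delta).

Definition HS : base := fun r =>
  premises r = [::] /\
  exists (p : atom) (G D : {fset atom}), conclusion r = (G `|` [fset p], [fset p] `|` D).

Definition cf_valid (Gamma Delta : {fset form}) : Prop :=
  forall B, extends HS B -> supports B Gamma Delta.

Inductive CLp : {fset form} -> {fset form} -> Prop :=
| CLp_init : forall G D A, CLp (G `|` [fset A]) ([fset A] `|` D)
| CLp_Lbot : forall G D, CLp (G `|` [fset Bot]) D
| CLp_Rbot : forall G D, CLp G D -> CLp G ([fset Bot] `|` D)
| CLp_Land : forall G D A B,
    CLp ([fset A; B] `|` G) D -> CLp ([fset And A B] `|` G) D
| CLp_Rand : forall G D G' D' A B,
    CLp G (D `|` [fset A]) -> CLp G' (D' `|` [fset B]) ->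
    CLp (G `|` G') (D `|` D' `|` [fset And A B])
| CLp_Lor : forall G D G' D' A B,
    CLp ([fset A] `|` G) D -> CLp ([fset B] `|` G') D' ->
    CLp ([fset Or A B] `|` G `|` G') (D `|` D')
| CLp_Ror : forall G D A B,
    CLp G (D `|` [fset A; B]) -> CLp G (D `|` [fset Or A B])
| CLp_Limp : forall G D G' D' A B,
    CLp G (D `|` [fset A]) -> CLp ([fset B] `|` G') D' ->
    CLp ([fset Imp A B] `|` G `|` G') (D `|` D')
| CLp_Rimp : forall G D A B,
    CLp ([fset A] `|` G) (D `|` [fset B]) -> CLp G (D `|` [fset Imp A B]).

(* Main.v *)
Require Import Defs.
From HB Require Import structures.
From mathcomp Require Import all_boot.
From mathcomp Require Import finmap.
From mathcomp Require Import zify.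
Set Implicit Arguments. Unset Strict Implicit. Unset Printing Implicit Defensive.
Local Open Scope fset_scope.

Lemma weight_D1 D F : F \in D -> weight D = (fsize F + weight (D `\ F))%N.
Proof. by move=> FD; rewrite /weight (big_fsetD1 _ FD). Qed.

Lemma weight_sub A B : A `<=` B -> weight A <= weight B.
Proof.
move=> AB; rewrite /weight [X in _ <= X](big_fsetID _ (mem A)) /=.
have -> : [fset x in B | x \in A] = A.
  apply/fsetP=> x; rewrite !inE /=; case xA: (x \in A); last by rewrite andbF.
  by rewrite (fsubsetP AB).
exact: leq_addr.
Qed.

Lemma weightU X Y : weight (X `|` Y) <= (weight X + weight Y)%N.
Proof.
rewrite /weight (big_fsetID _ (mem X)) /=.
have -> : [fset x in X `|` Y | x \in X] = X.
  by apply/fsetP=> x; rewrite !inE /=; case: (x \in X); rewrite ?andbF.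
rewrite leq_add2l; apply: weight_sub; apply/fsubsetP=> x; rewrite !inE /=.
by case/andP=> /orP[->|//].
Qed.

Lemma weight1 A : weight [fset A] = fsize A.
Proof. by rewrite /weight big_seq_fset1. Qed.

Lemma weight_atomset Th : weight (atomset Th) = 0.
Proof.
rewrite /weight big_seq big1 // => F /imfsetP [p _ ->] //.
Qed.

Lemma weight_mem D F : F \in D -> fsize F <= weight D.
Proof. by move=> /weight_D1 ->; apply: leq_addr. Qed.

Lemma pick_someP D F : pick_complex D = Some F -> F \in D /\ ~~ is_atom F.
Proof.
rewrite /pick_complex; case E: [seq _ <- _ | _] => [|x s] //= [<-].
have : x \in [seq F <- (D : seq form) | ~~ is_atom F] by rewrite E inE eqxx.
by rewrite mem_filter => /andP[-> ->].
Qed.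

Lemma pick_noneP D : pick_complex D = None -> forall F, F \in D -> is_atom F.
Proof.
rewrite /pick_complex; case E: [seq _ <- _ | _] => [|x s] //= _ F FD.
apply/negPn/negP => nF.
have : F \in [seq F <- (D : seq form) | ~~ is_atom F] by rewrite mem_filter nF FD.
by rewrite E.
Qed.

Lemma mem_atoms_of D p : (p \in atoms_of D) = (Atom p \in D).
Proof.
rewrite /atoms_of !inE /= mem_pmap.
apply/mapP/idP => [[F FD]|FD]; last by exists (Atom p).
by case: F FD => //= q FD [->].
Qed.

Lemma mem_atomset Th F : (F \in atomset Th) = if F is Atom p then p \in Th else false.
Proof.
apply/imfsetP/idP => [[p pT ->]//|]; case: F => // p pT; by exists p.
Qed.

Lemma der_mono B C X Y : extends B C -> derivable B X Y -> derivable C X Y.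
Proof.
move=> ext; elim => [r Br pr Th Sg|r Br pr Th Sg _ IH].
  exact: der_axiom (ext _ Br) pr Th Sg.
exact: der_mix (ext _ Br) pr Th Sg IH.
Qed.

Lemma der_wkr B X Y : derivable B X Y -> forall Y', Y `<=` Y' -> derivable B X Y'.
Proof.
elim => [r Br pr Th Sg|r Br pr Th Sg _ IH] Y' sub.
  have -> : Y' = (conclusion r).2 `|` (Sg `|` Y').
    apply/fsetP=> x; rewrite !inE; apply/idP/idP => [->|]; first by rewrite !orbT.
    by case/orP=> [xc|/orP[xs|//]]; apply: (fsubsetP sub); rewrite !inE ?xc ?xs ?orbT.
  exact: der_axiom.
have H := der_mix Br pr (Theta := Th) (Sigma := fun i => Sg i `|` Y')
  (fun i lt => IH i lt _ (fsetUS _ (fsubsetUl _ _))).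
suff <- : (conclusion r).2 `|` \bigcup_(i <- iota 0 (size (premises r))) (Sg i `|` Y') = Y' by [].
apply/fsetP=> x; apply/idP/idP.
  case/fsetUP => [xc|/bigfcupP [i /andP[iI _] /fsetUP [xs|//]]];
    apply: (fsubsetP sub); rewrite inE ?xc //.
  by apply/orP; right; apply/bigfcupP; exists i => //; rewrite iI.
move=> xY; apply/fsetUP; right; apply/bigfcupP; exists 0.
  by rewrite mem_iota pr.
by rewrite inE xY orbT.
Qed.

Definition hyp := (form * {fset atom})%type.

Fixpoint pth (F : form) (H : seq hyp) (P : {fset atom}) : Prop :=
  match F with
  | Atom p => p \in P
  | Bot => True
  | And A C => pth A H P \/ pth C H P
  | Or A C => pth A H P /\ pth C H P
  | Imp A C => (exists Th, (A, Th) \in H /\ Th `<=` P) /\ pth C H P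
  end.

Definition pths (D : {fset form}) H P := forall X, X \in D -> pth X H P.

Definition hyps (C : base) (H : seq hyp) :=
  forall h, h \in H -> Defs.support C (fst h |` atomset (snd h)).

Definition CF (B : base) (D : {fset form}) : Prop :=
  forall C, extends B C -> forall H P, pths D H P -> hyps C H -> derivable C fset0 P.

Lemma ext_refl B : extends B B. Proof. by []. Qed.
Lemma ext_trans B C E : extends B C -> extends C E -> extends B E.
Proof. by move=> h1 h2 r /h1 /h2. Qed.

Lemma pth_mono F H H' P P' : {subset H <= H'} -> P `<=` P' -> pth F H P -> pth F H' P'.
Proof.
move=> sH sP; elim: F => [p|//|A IA C IC|A IA C IC|A IA C IC] /=.
- exact: (fsubsetP sP).
- by case=> [/IA|/IC]; [left|right].
- by case=> /IA ? /IC ?.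
- case=> [[Th [ThH ThP]] /IC ?]; split=> //; exists Th; split; first exact: sH.
  exact: fsubset_trans sP.
Qed.

Lemma pths_mono D H H' P P' : {subset H <= H'} -> P `<=` P' -> pths D H P -> pths D H' P'.
Proof. by move=> sH sP hD X /hD; apply: pth_mono. Qed.

Lemma pthsU A B H P : pths (A `|` B) H P <-> pths A H P /\ pths B H P.
Proof.
split=> [h|[hA hB] X /fsetUP [/hA|/hB] //]; split=> X XI; apply: h; by rewrite inE XI ?orbT.
Qed.

Lemma pths1 A H P : pths [fset A] H P <-> pth A H P.
Proof. by split=> [h|h X]; [apply: h; rewrite inE|rewrite inE => /eqP ->]. Qed.

Lemma pths_atomset Th H P : pths (atomset Th) H P <-> Th `<=` P.
Proof.
split=> [h|h X].
  by apply/fsubsetP=> p pT; apply: (h (Atom p)); rewrite mem_atomset.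
by rewrite mem_atomset; case: X => // p /(fsubsetP h).
Qed.

Lemma pths_atoms D H P : (forall F, F \in D -> is_atom F) ->
  (pths D H P <-> atoms_of D `<=` P).
Proof.
move=> hD; rewrite /pths; split=> [h|h X XD].
  by apply/fsubsetP=> p; rewrite mem_atoms_of => /h.
have := hD X XD; move: XD; case: X => // p pD _; apply: (fsubsetP h).
by rewrite mem_atoms_of.
Qed.

Lemma CF_mono B B' D : extends B B' -> CF B D -> CF B' D.
Proof. by move=> e h C e'; apply: h; apply: ext_trans e'. Qed.

Lemma atomic_char B D : (forall F, F \in D -> is_atom F) ->
  (derivable B fset0 (atoms_of D) <-> CF B D).
Proof.
move=> hD; rewrite /CF; split=> [d C e H P pD _|h].
  exact: (der_wkr (der_mono e d) (proj1 (pths_atoms H P hD) pD)).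
apply: (h B (@ext_refl B) [::] (atoms_of D)); first exact/(pths_atoms _ _ hD).
by move=> ?.
Qed.

Lemma fsize_pos F : ~~ is_atom F -> 0 < fsize F.
Proof. by case: F. Qed.

Lemma CF_sub B D D' : (forall H P, pths D' H P -> pths D H P) -> CF B D -> CF B D'.
Proof. by move=> s h C e H P /s; apply: h. Qed.

Lemma weightU1 A X : weight (A |` X) <= (fsize A + weight X)%N.
Proof. by rewrite -weight1; apply: weightU. Qed.

Lemma char_aux n : forall B D, weight D <= n -> (supp n B D <-> CF B D).
Proof.
elim/ltn_ind: n => -[|n] IH B D wD.
  apply: atomic_char => F FD; apply/negPn/negP => /fsize_pos p.
  by have := leq_trans p (leq_trans (weight_mem FD) wD).
rewrite /=; case E: (pick_complex D) => [F|]; last by apply: atomic_char; apply: pick_noneP.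
have [FD nF] := pick_someP E.
have wDF := weight_D1 FD.
rewrite -[in CF B D](fsetD1K FD).
set G := D `\ F in wDF *.
have IHn : forall B0 X, weight X <= n -> (supp n B0 X <-> CF B0 X) by move=> *; apply: IH.
have IHs : forall B0 X, weight X <= n -> (Defs.support B0 X <-> CF B0 X).
  by move=> B0 X wX; apply: IH => //; apply: leq_ltn_trans wX _.
have wU : forall X Y, (weight X + weight Y <= n)%N -> weight (X `|` Y) <= n.
  by move=> X Y h; apply: leq_trans (weightU _ _) h.
clearbody G; clear E FD.
case: F nF wDF => // [|A C|A C|A C] nF wDF; rewrite wDF /= in wD.
- have wG : weight G <= n by lia.
  split=> [/(IHn _ _ wG)|h].
    by apply: CF_sub => H P /pthsU [].
  apply/(IHn _ _ wG); apply: CF_sub h => H P hG.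
  by apply/pthsU; split=> //; apply/pths1.
- have w1 : weight (A |` G) <= n by have := weightU1 A G; lia.
  have w2 : weight (C |` G) <= n by have := weightU1 C G; lia.
  split=> [[/(IHn _ _ w1) h1 /(IHn _ _ w2) h2]|h].
    move=> C0 e H P /pthsU [/pths1 [pA|pC] pG].
      by apply: h1 => //; apply/pthsU; split=> //; apply/pths1.
    by apply: h2 => //; apply/pthsU; split=> //; apply/pths1.
  split; [apply/(IHn _ _ w1)|apply/(IHn _ _ w2)]; apply: CF_sub h => H P /pthsU [/pths1 p pG].
    by apply/pthsU; split=> //; apply/pths1; left.
  by apply/pthsU; split=> //; apply/pths1; right.
- have w1 : weight (A |` (C |` G)) <= n.
    by have := weightU1 A (C |` G); have := weightU1 C G; lia.
  split=> [/(IHn _ _ w1)|h].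
    apply: CF_sub => H P.
    by move=> /pthsU [/pths1 [pA pC] pG]; apply/pthsU; split; [apply/pths1|apply/pthsU; split=> //; apply/pths1].
  apply/(IHn _ _ w1); apply: CF_sub h => H P.
  by move=> /pthsU [/pths1 pA /pthsU [/pths1 pC pG]]; apply/pthsU; split=> //; apply/pths1.
- have wA : forall Th, weight (A |` atomset Th) <= n.
    by move=> Th; have := weightU1 A (atomset Th); rewrite weight_atomset; lia.
  have wC : forall Th, weight (C |` (atomset Th `|` G)) <= n.
    move=> Th; have := weightU1 C (atomset Th `|` G); have := weightU (atomset Th) G.
    rewrite weight_atomset; lia.
  split=> [h|h].
    move=> C0 e H P /pthsU [/pths1 [[Th [ThH ThP]] pC] pG] hy.
    have sA : Defs.support C0 (A |` atomset Th) by exact: (hy _ ThH).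
    have sA' : supp n C0 (A |` atomset Th).
      by apply/(IHn _ _ (wA Th)); apply/(IHs _ _ (wA Th)).
    have := h C0 e Th sA' => /(IHn _ _ (wC Th)) hC; apply: (hC C0 (@ext_refl C0) H P) => //.
    apply/pthsU; split; first by apply/pths1.
    by apply/pthsU; split=> //; apply/pths_atomset.
  move=> B' e Th /(IHn _ _ (wA Th)) sA; apply/(IHn _ _ (wC Th)).
  move=> C0 e' H P /pthsU [/pths1 pC /pthsU [/pths_atomset ThP pG]] hy.
  apply: (h C0 (ext_trans e e') ((A, Th) :: H) P).
    apply/pthsU; split; last by apply: pths_mono pG => // x xH; rewrite inE xH orbT.
    apply/pths1; split; first by exists Th; rewrite inE eqxx.
    by apply: pth_mono pC => // x xH; rewrite inE xH orbT.
  move=> h0; rewrite inE => /orP [/eqP -> /=|/hy //].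
  by apply/(IHs _ _ (wA Th)); apply: CF_mono e' sA.
Qed.

Lemma charS B D : Defs.support B D <-> CF B D.
Proof. exact: char_aux. Qed.

Definition CFa (C : base) (S : {fset atom}) (D : {fset form}) : Prop :=
  forall C', extends C C' -> forall H P, S `<=` P -> pths D H P -> hyps C' H ->
    derivable C' fset0 P.

Lemma CF_atomset C S D : CF C (atomset S `|` D) <-> CFa C S D.
Proof.
split=> h C' e H P.
  by move=> sP pD; apply: h => //; apply/pthsU; split=> //; apply/pths_atomset.
by move=> /pthsU [/pths_atomset sP pD]; apply: h.
Qed.

Lemma supA C A Th : Defs.support C (A |` atomset Th) <-> CFa C Th [fset A].
Proof. by rewrite fsetUC; split=> [/charS /CF_atomset //|/CF_atomset /charS]. Qed.

Lemma CFa_mono C C' S S' D D' : extends C C' -> S `<=` S' ->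
  (forall H P, pths D' H P -> pths D H P) -> CFa C S D -> CFa C' S' D'.
Proof.
move=> e sS sD h C0 e0 H P sP /sD pD; apply: h => //; first exact: ext_trans e0.
exact: fsubset_trans sP.
Qed.

Lemma hyps_mono C C' H : extends C C' -> hyps C H -> hyps C' H.
Proof. by move=> e hy h /hy /charS hc; apply/charS; apply: CF_mono hc. Qed.

Lemma cut C S E A R : CFa C S (A |` E) ->
  (forall C' S', extends C C' -> S `<=` S' -> CFa C' S' [fset A] -> CFa C' S' R) ->
  CFa C S (E `|` R).
Proof.
move=> h1 h2 C' e H P sP /pthsU [pE pR] hy.
have hA : CFa C' P [fset A].
  move=> C'' e' H' P' sP' /pths1 pA hy'.
  apply: (h1 C'' (ext_trans e e') (H ++ H') P').
  - exact: fsubset_trans sP'.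
  - apply/pthsU; split.
      by apply/pths1; apply: pth_mono pA => // x xH; rewrite mem_cat xH orbT.
    by apply: pths_mono pE => // x xH; rewrite mem_cat xH.
  - move=> h; rewrite mem_cat => /orP [/(hyps_mono e' hy)|/hy'] //.
exact: (h2 C' P e sP hA C' (@ext_refl C') H P (fsubset_refl _) pR hy).
Qed.

Lemma mp C S A B : CFa C S [fset A] -> CFa C S [fset Imp A B] -> CFa C S [fset B].
Proof.
move=> hA hI C' e H P sP /pths1 pB hy.
apply: (hI C' e ((A, P) :: H) P sP).
  apply/pths1; split; first by exists P; rewrite inE eqxx.
  by apply: pth_mono pB => // x xH; rewrite inE xH orbT.
move=> h; rewrite inE => /orP [/eqP -> /=|/hy //].
by apply/supA; apply: CFa_mono hA.
Qed.

Definition Sound (G D : {fset form}) :=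
  forall C S, (forall X, X \in G -> CFa C S [fset X]) -> CFa C S D.

Lemma lift_hyps (G : {fset form}) C C' S S' : (forall X, X \in G -> CFa C S [fset X]) ->
  extends C C' -> S `<=` S' -> forall X, X \in G -> CFa C' S' [fset X].
Proof. by move=> h e s X /h; apply: CFa_mono. Qed.

Lemma inU1 (X : form) (A B : {fset form}) : X \in A -> X \in A `|` B.
Proof. by move=> h; rewrite inE h. Qed.
Lemma inU2 (X : form) (A B : {fset form}) : X \in B -> X \in A `|` B.
Proof. by move=> h; rewrite inE h orbT. Qed.
Lemma in1 (X : form) : X \in [fset X].
Proof. by rewrite inE. Qed.

Lemma sound G D : CLp G D -> Sound G D.
Proof.
elim => {G D}.
-
  move=> G D A C S h; apply: CFa_mono (h A (inU2 _ (in1 _))) => // H P /pthsU [].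
  done.
-
  move=> G D C S h; apply: CFa_mono (h Bot (inU2 _ (in1 _))) => // H P _.
  by apply/pths1.
-
  move=> G D _ IH C S h; apply: CFa_mono (IH C S h) => // H P /pthsU [].
  done.
-
  move=> G D A B _ IH C S h; apply: IH => X; rewrite !inE => /orP [/orP [/eqP ->|/eqP ->]|XG].
  + apply: CFa_mono (h _ (inU1 _ (in1 _))) => // H P /pths1 p; apply/pths1; by left.
  + apply: CFa_mono (h _ (inU1 _ (in1 _))) => // H P /pths1 p; apply/pths1; by right.
  + exact: h (inU2 _ XG).
-
  move=> G D G' D' A B _ IH1 _ IH2 C S h.
  have h1 := IH1 C S (fun X XG => h X (inU1 _ XG)).
  have h2 := IH2 C S (fun X XG => h X (inU2 _ XG)).
  move=> C' e H P sP /pthsU [/pthsU [pD pD'] /pths1 [pA|pB]] hy.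
    by apply: (h1 C' e H P sP) => //; apply/pthsU; split=> //; apply/pths1.
  by apply: (h2 C' e H P sP) => //; apply/pthsU; split=> //; apply/pths1.
-
  move=> G D G' D' A B _ IH1 _ IH2 C S h.
  have hO : CFa C S (A |` [fset B]).
    apply: CFa_mono (h _ (inU1 _ (inU1 _ (in1 _)))) => // H P /pthsU [/pths1 pA /pths1 pB].
    by apply/pths1.
  have hBD : CFa C S ([fset B] `|` D).
    apply: (cut hO) => C' S' e s hA; apply: IH1 => X; rewrite !inE => /orP [/eqP ->|XG] //.
    exact: lift_hyps h e s X (inU1 _ (inU2 _ XG)).
  apply: (cut hBD) => C' S' e s hB; apply: IH2 => X; rewrite !inE => /orP [/eqP ->|XG] //.
  exact: lift_hyps h e s X (inU2 _ XG).
-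
  move=> G D A B _ IH C S h; apply: CFa_mono (IH C S h) => // H P /pthsU [pD /pths1 [pA pB]].
  apply/pthsU; split=> // X; rewrite !inE => /orP [/eqP ->|/eqP ->] //.
-
  move=> G D G' D' A B _ IH1 _ IH2 C S h.
  have h1 : CFa C S (A |` D).
    rewrite fsetUC; apply: IH1 => X XG; exact: h X (inU1 _ (inU2 _ XG)).
  apply: (cut h1) => C' S' e s hA; apply: IH2 => X; rewrite !inE => /orP [/eqP ->|XG].
    apply: mp hA _; exact: lift_hyps h e s _ (inU1 _ (inU1 _ (in1 _))).
  exact: lift_hyps h e s X (inU2 _ XG).
-
  move=> G D A B _ IH C S h C' e H P sP /pthsU [pD /pths1 [[Th [ThH ThP]] pB]] hy.
  have hA : CFa C' P [fset A].
    by apply: CFa_mono (proj1 (supA _ _ _) (hy _ ThH)) => //.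
  have hc : CFa C' P (D `|` [fset B]).
    apply: IH => X; rewrite !inE => /orP [/eqP ->|XG] //.
    exact: lift_hyps h e sP X XG.
  apply: (hc C' (@ext_refl C') H P (fsubset_refl _)) => //.
  by apply/pthsU; split=> //; apply/pths1.
Qed.

Theorem mainTheorem6 (Gamma Delta : {fset form}) :
  CLp Gamma Delta -> cf_valid Gamma Delta.
Proof.
move=> /sound hS B _; rewrite /supports; case: ifP => [/eqP EG|_].
  apply/charS; have -> : Delta = atomset fset0 `|` Delta.
    by rewrite /atomset imfset0 fset0U.
  by apply/CF_atomset; apply: hS => X; rewrite EG inE.
move=> C e Th hT; apply/charS/CF_atomset; apply: hS => X XG.
have := hT X XG => /charS /CF_atomset; apply: CFa_mono => //.
exact: bigfcup_sup.
Qed.
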